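(* Let $b_1$ be a positive integer with $b_1<n^*$. If $(\sigma^1,\sigma^2)$ is a Nash equilibrium of $\Gamma(b_1,1)$, then for every positive integer $b_2<m^*$ there exists $\hat\sigma^2\in\Delta(\mathcal A_2)$ (with $\mathcal A_2$ for budget $b_2$) such that $(\sigma^1,\hat\sigma^2)$ is a Nash equilibrium of $\Gamma(b_1,b_2)$; that is, equilibrium inspection strategies of $\Gamma(b_1,1)$ are equilibrium inspection strategies of every $\Gamma(b_1,b_2)$ with $b_2<m^*$.
   Context: Detection model: finite nonempty sets $\mathcal V$, $\mathcal E$, monitoring sets $\mathcal C_i\subseteq\mathcal E$ ($i\in\mathcal V$) with every $e\in\mathcal E$ in some $\mathcal C_i$; $\mathcal C_S=\bigcup_{i\in S}\mathcal C_i$; $F(S,T)=|\mathcal C_S\cap T|$. Set cover: $S\subseteq\mathcal V$ with $\mathcal C_S=\mathcal E$; $n^*$ = minimum size of a set cover. Set packing: $T\subseteq\mathcal E$ with $|\mathcal C_i\cap T|\le1$ for all $i$; $m^*$ = maximum size of a set packing. Game $\Gamma(b_1,b_2)$ ($b_1,b_2$ positive integers): $\mathcal A_1=\{S\subseteq\mathcal V:|S|\le b_1\}$, $\mathcal A_2=\{T\subseteq\mathcal E:|T|\le b_2\}$; mixed strategies $\sigma^1\in\Delta(\mathcal A_1)$, $\sigma^2\in\Delta(\mathcal A_2)$ (independent); payoffs $U_1=\mathbb E[F(S,T)]$, $U_2=\mathbb E[|T|]-\mathbb E[F(S,T)]$; Nash equilibrium in mixed strategies as usual. Note that the inspector's strategy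 set $\Delta(\mathcal A_1)$ does not depend on $b_2$. *)

(* Defs.v *)
From HB Require Import structures.
From mathcomp Require Import all_boot all_order all_algebra.
Set Implicit Arguments. Unset Strict Implicit. Unset Printing Implicit Defensive.
Import Order.TTheory GRing.Theory Num.Theory.

Section Detection.
Variables (V E : finType) (C : V -> {set E}).

Definition CS (S : {set V}) : {set E} := \bigcup_(i in S) C i.

Definition Fdet (S : {set V}) (T : {set E}) : nat := #|CS S :&: T|.

Definition set_cover (S : {set V}) : bool := CS S == [set: E].
Definition set_packing (T : {set E}) : bool := [forall i, #|C i :&: T| <= 1].

(* n^* : minimum size of a set cover (setT is a cover when every edge is monitored). *)
Definition n_star : nat := \big[minn/#|V|]_(S : {set V} | set_cover S) #|S|.
Definition m_star : nat := \max_(T : {set E} | set_packing T) #|T|.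

Definition A1 (b1 : nat) (S : {set V}) : bool := #|S| <= b1.
Definition A2 (b2 : nat) (T : {set E}) : bool := #|T| <= b2.

Variable R : realFieldType.
Local Open Scope ring_scope.

Definition mixed (X : finType) (A : pred X) (s : X -> R) : Prop :=
  (forall x, 0 <= s x) /\ (forall x, ~~ A x -> s x = 0) /\ \sum_x s x = 1.

Definition U1 (s1 : {set V} -> R) (s2 : {set E} -> R) : R :=
  \sum_(S : {set V}) \sum_(T : {set E}) s1 S * s2 T * (Fdet S T)%:R.

Definition U2 (s1 : {set V} -> R) (s2 : {set E} -> R) : R :=
  \sum_(S : {set V}) \sum_(T : {set E}) s1 S * s2 T * ((#|T|)%:R - (Fdet S T)%:R).

Definition nash (b1 b2 : nat) (s1 : {set V} -> R) (s2 : {set E} -> R) : Prop :=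
  [/\ mixed (A1 b1) s1, mixed (A2 b2) s2,
      (forall s1', mixed (A1 b1) s1' -> U1 s1' s2 <= U1 s1 s2) &
      (forall s2', mixed (A2 b2) s2' -> U2 s1 s2' <= U2 s1 s2)].

End Detection.

(* Main.v *)
Require Import Defs.
From HB Require Import structures.
From mathcomp Require Import all_boot all_order all_algebra.
From mathcomp Require Import ring lra.
Import Order.TTheory GRing.Theory Num.Theory.

Set Implicit Arguments. Unset Strict Implicit. Unset Printing Implicit Defensive.
Local Open Scope ring_scope.

Definition frac (E : finType) (R : realFieldType) (r : E -> R) : {set E} :=
  [set e | (0 < r e) && (r e < 1)].

Definition roundable (E : finType) (R : realFieldType) (k : nat) (r : E -> R) :=
  exists s : {set E} -> R, [/\ forall T, 0 <= s T, forall T, s T != 0 -> (#|T| <= k)%N,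
     \sum_T s T = 1 & forall e, \sum_(T : {set E} | e \in T) s T = r e].

Lemma mix_roundable (E : finType) (R : realFieldType) k (r r1 r2 : E -> R) l :
  0 <= l <= 1 -> (forall e, r e = l * r1 e + (1 - l) * r2 e) ->
  roundable k r1 -> roundable k r2 -> roundable k r.
Proof.
move=> /andP[l0 l1] hr [s1 [p1 z1 t1 m1]] [s2 [p2 z2 t2 m2]].
exists (fun T => l * s1 T + (1 - l) * s2 T); split.
- move=> T; apply: addr_ge0; apply: mulr_ge0 => //; by rewrite subr_ge0.
- move=> T nz; case: (eqVneq (s1 T) 0) => [h1|/z1//]; case: (eqVneq (s2 T) 0) => [h2|/z2//].
  by move: nz; rewrite h1 h2 !mulr0 addr0 eqxx.
- by rewrite big_split /= -!mulr_sumr t1 t2 !mulr1 addrC subrK.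
- by move=> e; rewrite big_split /= -!mulr_sumr m1 m2 hr.
Qed.

Lemma sum_ind (E : finType) (R : realFieldType) (A : {set E}) :
  \sum_e (e \in A)%:R = #|A|%:R :> R.
Proof.
rewrite -sum1_card natr_sum [RHS]big_mkcond; apply: eq_bigr => e _; by case: (e \in A).
Qed.

Lemma sum_delta (E : finType) (R : realFieldType) (a : E) :
  \sum_e (e == a)%:R = 1 :> R.
Proof. by rewrite (bigD1 a) //= eqxx big1 ?addr0 // => e /negbTE ->. Qed.

Lemma int_val (E : finType) (R : realFieldType) (r : E -> R) e :
  0 <= r e <= 1 -> e \notin frac r -> r e = (r e == 1)%:R.
Proof.
move=> /andP[h0 h1]; rewrite inE negb_and -!leNgt => /orP[h|h].
- have -> : r e = 0 by apply/eqP; rewrite eq_le h h0.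
  by rewrite eq_sym oner_eq0.
- have -> : r e = 1 by apply/eqP; rewrite eq_le h h1.
  by rewrite eqxx.
Qed.

Lemma sum_int (E : finType) (R : realFieldType) (r : E -> R) :
  (forall e, 0 <= r e <= 1) -> frac r = set0 ->
  \sum_e r e = #|[set e | r e == 1]|%:R.
Proof.
move=> r01 f0; rewrite -sum_ind; apply: eq_bigr => e _.
by rewrite inE -int_val // f0 inE.
Qed.

Lemma int_roundable (E : finType) (R : realFieldType) k (r : E -> R) :
  (forall e, 0 <= r e <= 1) -> frac r = set0 -> \sum_e r e <= k%:R -> roundable k r.
Proof.
move=> r01 f0; rewrite sum_int // ler_nat => hk.
set T0 := [set e | r e == 1].
exists (fun T => (T == T0)%:R); split.
- by move=> T; rewrite ler0n.
- move=> T; case: (eqVneq T T0) => [->|]; first by move=> _; exact: hk.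
  by move=> _; rewrite /= mulr0n eqxx.
- by rewrite (bigD1 T0) //= eqxx big1 ?addr0 // => T /negbTE ->.
- move=> e; rewrite big_mkcond /= (bigD1 T0) //= eqxx big1 ?addr0.
    rewrite [RHS](int_val (r01 e)); last by rewrite f0 inE.
    by rewrite /T0 inE; case: (r e == 1).
  by move=> T /negbTE ->; case: (e \in T).
Qed.


Lemma fracE (E : finType) (R : realFieldType) (r : E -> R) e :
  (e \in frac r) = (0 < r e) && (r e < 1).
Proof. by rewrite inE. Qed.

Lemma frac_lt (E : finType) (R : realFieldType) (r r' : E -> R) x :
  x \in frac r -> x \notin frac r' -> (forall e, e \in frac r' -> e \in frac r) ->
  (#|frac r'| < #|frac r|)%N.
Proof.
move=> xr xr' sub; apply: proper_card; rewrite properE; apply/andP; split.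
  by apply/subsetP.
by apply/subsetPn; exists x.
Qed.

Lemma round_ind (E : finType) (R : realFieldType) (k n : nat) : forall r : E -> R,
  (forall e, 0 <= r e <= 1) -> \sum_e r e <= k%:R -> (#|frac r| <= n)%N -> roundable k r.
Proof.
elim: n => [|n IH] r r01 rk.
  by rewrite leqn0 cards_eq0 => /eqP f0; exact: int_roundable.
rewrite leq_eqVlt ltnS => /orP[/eqP fn|]; last exact: IH.
have [a aF] : exists a, a \in frac r.
  by apply/set0Pn; rewrite -card_gt0 fn.
have aF' := aF; rewrite inE in aF'; case/andP: aF' => a0 a1.
case: (boolP [exists b, (b \in frac r) && (b != a)]) => [/existsP[b /andP[bF ba]] | /existsPn none].
-
  have bF' := bF; rewrite inE in bF'; case/andP: bF' => b0 b1.
  pose c e : R := (e == a)%:R - (e == b)%:R.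
  pose sh (d : R) e := r e + d * c e.
  have ca : c a = 1 by rewrite /c eqxx eq_sym (negbTE ba) subr0.
  have cb : c b = -1 by rewrite /c eqxx (negbTE ba) sub0r.
  have co e : e != a -> e != b -> c e = 0 by rewrite /c => /negbTE -> /negbTE ->; rewrite subrr.
  have sumsh d : \sum_e sh d e = \sum_e r e.
    rewrite big_split /= -mulr_sumr /c sumrB !sum_delta subrr mulr0 addr0 //.
  pose e1 := if 1 - r a <= r b then 1 - r a else r b.
  pose e2 := if r a <= 1 - r b then r a else 1 - r b.
  have e1p : 0 < e1 by rewrite /e1; case: ifP => _ //; rewrite subr_gt0.
  have e2p : 0 < e2 by rewrite /e2; case: ifP => _ //; rewrite subr_gt0.
  have e1a : e1 <= 1 - r a by rewrite /e1; case: ifP => h; [lra | move/negbT: h; rewrite -ltNge => h; lra].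
  have e1b : e1 <= r b by rewrite /e1; case: ifP => h; [by rewrite h | lra].
  have e2a : e2 <= r a by rewrite /e2; case: ifP => h; [lra | move/negbT: h; rewrite -ltNge => h; lra].
  have e2b : e2 <= 1 - r b by rewrite /e2; case: ifP => h; [by rewrite h | lra].
  have shbnd d : - e2 <= d <= e1 -> forall e, 0 <= sh d e <= 1.
    move=> /andP[dl du] e; rewrite /sh.
    case: (eqVneq e a) => [->|ea]; first by rewrite ca mulr1; apply/andP; split; lra.
    case: (eqVneq e b) => [->|eb]; first by rewrite cb mulrN1; apply/andP; split; lra.
    by rewrite co // mulr0 addr0.
  have shsub d e : e \in frac (sh d) -> e \in frac r.
    case: (eqVneq e a) => [->//|ea]; case: (eqVneq e b) => [->//|eb].
    by rewrite !fracE /sh co // mulr0 addr0.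
  have R1 : roundable k (sh e1).
    apply: IH; first by apply: shbnd; apply/andP; split; lra.
      by rewrite sumsh.
    rewrite -ltnS -fn.
    case: (boolP (1 - r a <= r b)) => h.
    + apply: (frac_lt aF); last exact: shsub; rewrite fracE /sh ca mulr1 /e1 h negb_and.
      by rewrite addrC subrK ltxx orbT.
    + apply: (frac_lt bF); last exact: shsub; rewrite fracE /sh cb mulrN1 /e1 (negbTE h).
      by rewrite subrr ltxx.
  have R2 : roundable k (sh (- e2)).
    apply: IH; first by apply: shbnd; apply/andP; split; lra.
      by rewrite sumsh.
    rewrite -ltnS -fn.
    case: (boolP (r a <= 1 - r b)) => h.
    + apply: (frac_lt aF); last exact: shsub; rewrite fracE /sh ca mulr1 /e2 h.
      by rewrite addrN ltxx.
    + apply: (frac_lt bF); last exact: shsub; rewrite fracE /sh cb mulrN1 /e2 (negbTE h) negb_and.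
      by rewrite opprK addrC subrK ltxx orbT.
  pose l := e2 / (e1 + e2).
  have hl : l * e1 = (1 - l) * e2.
    rewrite /l; field; apply/lt0r_neq0; lra.
  apply: (mix_roundable (l := l) _ _ R1 R2).
    rewrite /l; apply/andP; split; first by apply: divr_ge0; lra.
    by rewrite ler_pdivrMr ?mul1r; lra.
  move=> e; rewrite /sh.
  have -> : l * (r e + e1 * c e) + (1 - l) * (r e + - e2 * c e) =
            r e + (l * e1 - (1 - l) * e2) * c e by ring.
  by rewrite hl subrr mul0r addr0.
-
  have single e : e \in frac r -> e = a.
    move=> eF; apply/eqP; apply: contraT => ea.
    by move: (none e); rewrite eF ea.
  pose rup e : R := if e == a then 1 else r e.
  pose rdn e : R := if e == a then 0 else r e.
  have fup : frac rup = set0.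
    apply/setP => e; rewrite !inE /rup; case: (eqVneq e a) => [_|ea]; first by rewrite ltxx andbF.
    by apply: contraNF ea => h; apply/eqP; apply: single; rewrite inE.
  have fdn : frac rdn = set0.
    apply/setP => e; rewrite !inE /rdn; case: (eqVneq e a) => [_|ea]; first by rewrite ltxx.
    by apply: contraNF ea => h; apply/eqP; apply: single; rewrite inE.
  have bup e : 0 <= rup e <= 1 by rewrite /rup; case: ifP => _ //; rewrite ler01 lexx.
  have bdn e : 0 <= rdn e <= 1 by rewrite /rdn; case: ifP => _ //; rewrite lexx ler01.
  have sdn : \sum_e r e = \sum_e rdn e + r a.
    rewrite (bigD1 a) //= [X in _ = X + _](bigD1 a) //= /rdn eqxx add0r addrC.
    congr (_ + _); apply: eq_bigr => e /negbTE ->; done.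
  have sup : \sum_e rup e = \sum_e rdn e + 1.
    rewrite (bigD1 a) //= [X in _ = X + _](bigD1 a) //= /rdn /rup eqxx add0r addrC.
    congr (_ + _); apply: eq_bigr => e /negbTE ->; done.
  move: (sum_int bdn fdn) => hdn.
  have hk : (#|[set e | rdn e == 1%R]| < k)%N.
    rewrite -(ltr_nat R) -hdn; apply: (lt_le_trans _ rk); rewrite sdn; lra.
  apply: (mix_roundable (l := r a) (r1 := rup) (r2 := rdn)).
  - apply/andP; split; lra.
  - move=> e; rewrite /rup /rdn; case: (eqVneq e a) => [->|_].
      by rewrite mulr1 mulr0 addr0.
    by rewrite -mulrDl addrC subrK mul1r.
  - apply: int_roundable => //; rewrite sup hdn natr1 ler_nat; exact: hk.
  - apply: int_roundable => //; apply: le_trans rk; rewrite sdn; lra.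
Qed.

Lemma roundP (E : finType) (R : realFieldType) (k : nat) (r : E -> R) :
  (forall e, 0 <= r e <= 1) -> \sum_e r e <= k%:R -> roundable k r.
Proof. by move=> h1 h2; apply: (round_ind (n := #|frac r|)). Qed.


Lemma natb (R : realFieldType) (b : bool) : b%:R = (if b then 1 else 0) :> R.
Proof. by case: b; rewrite /= ?mulr1n ?mulr0n. Qed.

Definition mg (E : finType) (R : realFieldType) (s : {set E} -> R) (e : E) : R :=
  \sum_(T : {set E} | e \in T) s T.
Definition pd (V E : finType) (C : V -> {set E}) (R : realFieldType)
  (s : {set V} -> R) (e : E) : R := \sum_S s S * (e \in CS C S)%:R.
Definition dl (X : finType) (R : realFieldType) (x : X) : X -> R := fun y => (y == x)%:R.

Lemma mgE (E : finType) (R : realFieldType) (s : {set E} -> R) e :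
  mg s e = \sum_T s T * (e \in T)%:R.
Proof. rewrite /mg big_mkcond; apply: eq_bigr => T _; by rewrite natb; case: (e \in T); rewrite ?mulr1 ?mulr0. Qed.

Lemma sum_indR (E : finType) (R : realFieldType) (A : {set E}) :
  \sum_e (e \in A)%:R = #|A|%:R :> R.
Proof.
rewrite -sum1_card natr_sum [RHS]big_mkcond; apply: eq_bigr => e _; by case: (e \in A).
Qed.

Lemma sum_mg (E : finType) (R : realFieldType) (s : {set E} -> R) :
  \sum_e mg s e = \sum_T s T * #|T|%:R.
Proof.
under eq_bigr do rewrite mgE.
rewrite exchange_big /=; apply: eq_bigr => T _; by rewrite -mulr_sumr sum_indR.
Qed.

Lemma UUE (V E : finType) (C : V -> {set E}) (R : realFieldType) (s1 : {set V} -> R) (s2 : {set E} -> R) :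
  \sum_S \sum_T s1 S * s2 T * (Fdet C S T)%:R = \sum_e mg s2 e * pd C s1 e.
Proof.
have h S T : (Fdet C S T)%:R = \sum_e (e \in CS C S)%:R * (e \in T)%:R :> R.
  rewrite /Fdet -sum_indR; apply: eq_bigr => e _; by rewrite inE -natrM mulnb.
transitivity (\sum_S \sum_T \sum_e s1 S * (e \in CS C S)%:R * (s2 T * (e \in T)%:R)).
  apply: eq_bigr => S _; apply: eq_bigr => T _; rewrite h mulr_sumr; apply: eq_bigr => e _; ring.
under eq_bigr do rewrite exchange_big /=.
rewrite exchange_big /=; apply: eq_bigr => e _.
rewrite mgE /pd mulrC mulr_suml; apply: eq_bigr => S _.
by rewrite mulr_sumr.
Qed.


Lemma U1E (V E : finType) (C : V -> {set E}) (R : realFieldType) (s1 : {set V} -> R) (s2 : {set E} -> R) :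
  U1 C s1 s2 = \sum_e mg s2 e * pd C s1 e.
Proof. exact: UUE. Qed.

Lemma U2E (V E : finType) (C : V -> {set E}) (R : realFieldType) (s1 : {set V} -> R) (s2 : {set E} -> R) :
  U2 C s1 s2 = (\sum_S s1 S) * (\sum_e mg s2 e) - \sum_e mg s2 e * pd C s1 e.
Proof.
rewrite /U2 -UUE mulr_suml -sumrB; apply: eq_bigr => S _; rewrite sum_mg mulr_sumr -sumrB.
by apply: eq_bigr => T _; ring.
Qed.

Lemma pd_dl (V E : finType) (C : V -> {set E}) (R : realFieldType) (S0 : {set V}) e :
  pd C (dl R S0) e = (e \in CS C S0)%:R.
Proof.
rewrite /pd (bigD1 S0) //= /dl eqxx mul1r big1 ?addr0 // => S /negbTE ->.
by rewrite mul0r.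
Qed.

Lemma mg_dl (E : finType) (R : realFieldType) (T0 : {set E}) e :
  mg (dl R T0) e = (e \in T0)%:R.
Proof.
rewrite mgE (bigD1 T0) //= /dl eqxx mul1r big1 ?addr0 // => S /negbTE ->.
by rewrite mul0r.
Qed.

Lemma sum_dl (X : finType) (R : realFieldType) (x : X) : \sum_y dl R x y = 1.
Proof. by rewrite (bigD1 x) //= /dl eqxx big1 ?addr0 // => y /negbTE ->. Qed.

Lemma mixed_dl (X : finType) (R : realFieldType) (A : pred X) (x : X) :
  A x -> mixed A (dl R x).
Proof.
move=> Ax; split; first by move=> y; rewrite /dl ler0n.
split; last exact: sum_dl.
by move=> y; rewrite /dl; case: (eqVneq y x) => [->|]; [rewrite Ax | ].
Qed.

Lemma bigminn_le (I : finType) (P : pred I) (F : I -> nat) (x0 : nat) (i : I) :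
  P i -> (\big[minn/x0]_(j | P j) F j <= F i)%N.
Proof.
move=> Pi; have : i \in index_enum I by rewrite mem_index_enum.
elim: (index_enum I) => [//|j s IH]; rewrite in_cons big_cons => /orP[/eqP <-|/IH h].
  by rewrite Pi geq_minl.
case: (P j) => //; exact: leq_trans (geq_minr _ _) h.
Qed.

Lemma sum_in_ind (E : finType) (R : realFieldType) (A P : {set E}) :
  \sum_(e in P) (e \in A)%:R = #|A :&: P|%:R :> R.
Proof.
rewrite -sum_indR big_mkcond; apply: eq_bigr => e _; rewrite inE.
by case: (e \in P); case: (e \in A).
Qed.

Lemma pack_bound (V E : finType) (C : V -> {set E}) (R : realFieldType) (P : {set E}) (S : {set V}) :
  set_packing C P -> \sum_(e in P) (e \in CS C S)%:R <= #|S|%:R :> R.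
Proof.
move=> /forallP hP.
apply: (@le_trans _ _ (\sum_(e in P) \sum_(v in S) (e \in C v)%:R)).
  apply: ler_sum => e _; case: (boolP (e \in CS C S)) => [/bigcupP[v vS ev]|_].
    rewrite (bigD1 v) //= ev lerDl; apply: sumr_ge0 => w _; exact: ler0n.
  by rewrite natb; apply: sumr_ge0 => w _; exact: ler0n.
rewrite exchange_big /= -sum1_card natr_sum; apply: ler_sum => v _.
by rewrite sum_in_ind ler_nat hP.
Qed.


Definition qC (V E : finType) (C : V -> {set E}) (R : realFieldType) (q : E -> R) (S : {set V}) : R :=
  \sum_e q e * (e \in CS C S)%:R.

Lemma CS_mono (V E : finType) (C : V -> {set E}) (A B : {set V}) e :
  A \subset B -> e \in CS C A -> e \in CS C B.
Proof. move=> /subsetP AB /bigcupP[v vA ev]; apply/bigcupP; exists v => //; exact: AB. Qed.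

Lemma qC_ge0 (V E : finType) (C : V -> {set E}) (R : realFieldType) (q : E -> R) S :
  (forall e, 0 <= q e) -> 0 <= qC C q S.
Proof. by move=> hq; apply: sumr_ge0 => e _; apply: mulr_ge0. Qed.

Lemma unique_bound (V E : finType) (C : V -> {set E}) (R : realFieldType) (q : E -> R) (S : {set V}) :
  (forall e, 0 <= q e) -> \sum_(v in S) (qC C q S - qC C q (S :\ v)) <= qC C q S.
Proof.
move=> hq.
under eq_bigr do rewrite /qC -sumrB.
rewrite exchange_big /=; apply: ler_sum => e _.
under eq_bigr do rewrite -mulrBr.
rewrite -mulr_sumr; apply: ler_wpM2l => //.
case: (boolP (e \in CS C S)) => [/bigcupP[w wS ew]|eN].
  rewrite (bigD1 w) //= big1 ?addr0.
    by rewrite !natb; case: (e \in CS C (S :\ w)); lra.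
  move=> v /andP[vS vw]; have -> : e \in CS C (S :\ v).
    by apply/bigcupP; exists w => //; rewrite !inE eq_sym vw.
  by rewrite subrr.
rewrite big1 //= => v _.
have -> : e \in CS C (S :\ v) = false.
  by apply/negbTE; apply: contra eN; apply: CS_mono; exact: subsetDl.
by rewrite subrr.
Qed.

Lemma add_bound (V E : finType) (C : V -> {set E}) (R : realFieldType) (q : E -> R) (A : {set V}) x u :
  (forall e, 0 <= q e) -> x \notin CS C A -> x \in C u ->
  qC C q A + q x <= qC C q (u |: A).
Proof.
move=> hq xA xu.
have -> : q x = \sum_e q e * (e == x)%:R.
  rewrite (bigD1 x) //= eqxx mulr1 big1 ?addr0 // => e /negbTE ->; by rewrite mulr0.
rewrite /qC -big_split /=; apply: ler_sum => e _; rewrite -mulrDr; apply: ler_wpM2l => //.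
case: (eqVneq e x) => [->|ex].
  rewrite (negbTE xA); have -> : x \in CS C (u |: A) by apply/bigcupP; exists u => //; rewrite !inE eqxx.
  by rewrite add0r.
rewrite addr0 !natb; case: (boolP (e \in CS C A)) => h.
  by rewrite (CS_mono (subsetUr [set u] A) h).
by case: (e \in _); lra.
Qed.

Lemma qC_max (V E : finType) (C : V -> {set E}) (R : realFieldType) (q : E -> R) (s1 : {set V} -> R) b1 (M : R) (S : {set V}) :
  mixed (A1 b1) s1 -> (forall S : {set V}, (#|S| <= b1)%N -> qC C q S <= M) ->
  M = \sum_S s1 S * qC C q S -> s1 S != 0 -> qC C q S = M.
Proof.
move=> [s1p [s1z s1t]] hM ME nz.
have h : \sum_S s1 S * (M - qC C q S) = 0.
  under eq_bigr do rewrite mulrBr.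
  by rewrite sumrB -mulr_suml s1t mul1r -ME subrr.
have /psumr_eq0P h2 : forall S, true -> 0 <= s1 S * (M - qC C q S).
  move=> T _; case: (boolP (A1 b1 T)) => hT.
    by apply: mulr_ge0 => //; rewrite subr_ge0; apply: hM.
  by rewrite s1z // mul0r.
move: (h2 h S isT) => /eqP; rewrite mulf_eq0 (negbTE nz) /= subr_eq0 => /eqP <-.
done.
Qed.

Lemma main_bound (V E : finType) (C : V -> {set E}) (R : realFieldType) (q : E -> R) b1 (M : R) (S : {set V}) x u :
  (forall e, 0 <= q e) -> (forall S : {set V}, (#|S| <= b1)%N -> qC C q S <= M) ->
  qC C q S = M -> (#|S| <= b1)%N -> x \notin CS C S -> x \in C u ->
  b1%:R * q x <= M.
Proof.
move=> hq hM SM Sb xS xu.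
have uS : u \notin S.
  apply: contra xS => uS; apply/bigcupP; by exists u.
have M0 : 0 <= M by rewrite -SM; exact: qC_ge0.
rewrite leq_eqVlt in Sb; case/orP: Sb => [/eqP Sb | Sb].
-
  have hv v : v \in S -> qC C q (S :\ v) + q x <= M.
    move=> vS; apply: le_trans (add_bound hq _ xu) (hM _ _).
      by apply: contra xS; apply: CS_mono; exact: subsetDl.
    rewrite cardsU1 !inE negb_and uS orbT /= add1n.
    by rewrite -Sb (cardsD1 v S) vS.
  have h1 : \sum_(v in S) (qC C q (S :\ v) + q x) <= \sum_(v in S) M.
    by apply: ler_sum.
  have h2 := unique_bound C S hq.
  rewrite SM in h2.
  move: h1 h2; rewrite big_split /= sumrB !sumr_const -Sb.
  rewrite -[(q x) *+ _]mulr_natl -[M *+ _]mulr_natl.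
  by lra.
-
  have h := add_bound hq xS xu.
  have h' : qC C q (u |: S) <= M.
    by apply: hM; rewrite cardsU1 uS add1n.
  have qx0 : q x <= 0 by lra.
  have qx : q x = 0 by apply/eqP; rewrite eq_le qx0 hq.
  by rewrite qx mulr0.
Qed.


Close Scope ring_scope.
Unset Implicit Arguments.
Set Strict Implicit.

Theorem mainTheorem14 (V E : finType) (C : V -> {set E}) (R : realFieldType)
  (hV : 0 < #|V|) (hE : 0 < #|E|)
  (hcov : forall e : E, exists i : V, e \in C i)
  (b1 : nat) (hb1 : 0 < b1) (hb1n : b1 < n_star C)
  (s1 : {set V} -> R) (s2 : {set E} -> R) :
  nash C b1 1 s1 s2 ->
  forall b2 : nat, 0 < b2 -> b2 < m_star C ->
  exists s2hat : {set E} -> R, nash C b1 b2 s1 s2hat.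
Proof.
move=> [[s1p [s1z s1t]] [s2p [s2z s2t]] BR1 BR2] b2 b2p b2m.
Local Open Scope ring_scope.
set q := mg s2.
set p := pd C s1.
have qp e : 0 <= q e by rewrite /q /mg; apply: sumr_ge0.
have pp e : 0 <= p e by rewrite /p /pd; apply: sumr_ge0 => S _; apply: mulr_ge0.
have U2s s2' : U2 C s1 s2' = \sum_e mg s2' e * (1 - p e).
  rewrite U2E s1t mul1r -sumrB; apply: eq_bigr => e _; rewrite /p; ring.
set W := U2 C s1 s2.
have hW e : 1 - p e <= W.
  have := BR2 (dl R [set e]) (mixed_dl _ _); rewrite /A2 cards1 => /(_ isT).
  rewrite U2s; under eq_bigr do rewrite mg_dl.
  rewrite (bigD1 e) //= inE eqxx mul1r big1 ?addr0 //.
  by move=> y ye; rewrite inE natb (negbTE ye) mul0r.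
have W0 : 0 <= W.
  have := BR2 (dl R set0) (mixed_dl _ _); rewrite /A2 cards0 => /(_ isT).
  rewrite U2s; under eq_bigr do rewrite mg_dl inE natb mul0r.
  by rewrite big1.
have Qle : \sum_e q e <= 1.
  rewrite /q sum_mg -[X in _ <= X]s2t; apply: ler_sum => T _.
  case: (eqVneq (s2 T) 0) => [->|nz]; first by rewrite mul0r.
  have : A2 1 T by apply: contraT => h; move: nz; rewrite s2z // eqxx.
  rewrite /A2 -(lern1 R) => hT.
  by apply: le_trans (ler_wpM2l (s2p T) hT) _; rewrite mulr1.
have Wpos : 0 < W.
  rewrite lt_neqAle W0 andbT; apply/negP => /eqP Weq.
  have p1 e : 1 <= p e by have := hW e; rewrite -Weq; lra.
  case: (pickP (fun S => s1 S != 0)) => [S nz|h]; last first.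
    have : \sum_S s1 S = 0 by apply: big1 => S _; move: (h S) => /= /negbFE /eqP.
    by rewrite s1t => /eqP; rewrite oner_eq0.
  have AS : A1 b1 S by apply: contraT => hS; move: nz; rewrite s1z // eqxx.
  have cov : set_cover C S.
    apply/eqP/setP => e; rewrite inE; apply: contraT => eN.
    have : p e < 1.
      have s1S : 0 < s1 S by rewrite lt_neqAle eq_sym nz s1p.
      move: s1t; rewrite (bigD1 S) //= => s1t'.
      rewrite /p /pd (bigD1 S) //= (negbTE eN) natb mulr0 add0r.
      apply: (@le_lt_trans _ _ (\sum_(S' | S' != S) s1 S')); last by lra.
      apply: ler_sum => S' _; rewrite natb; case: ifP => _; rewrite ?mulr1 ?mulr0 //.
    by have := p1 e; lra.
  have hn : (n_star C <= #|S|)%N by apply: (@bigminn_le _ (set_cover C) (fun S : {set V} => #|S|) #|V| S cov).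
  by move: AS; rewrite /A1 => AS; have := leq_ltn_trans (leq_trans hn AS) hb1n; rewrite ltnn.
have WE : W = \sum_e q e * (1 - p e) by rewrite /W U2s.
have Q1 : \sum_e q e = 1.
  apply/eqP; rewrite eq_le Qle /=.
  rewrite -(ler_pM2l Wpos) mulr1 [X in X <= _]WE mulr_sumr; apply: ler_sum => e _.
  by rewrite mulrC; apply: ler_wpM2r.
set M := U1 C s1 s2.
have ME : M = 1 - W.
  rewrite /M U1E -Q1 WE -sumrB; apply: eq_bigr => e _; rewrite /p /q; ring.
have MqC : M = \sum_S s1 S * qC C q S.
  rewrite /M U1E /qC; under eq_bigr do rewrite /pd mulr_sumr.
  rewrite exchange_big /=; apply: eq_bigr => S _; rewrite mulr_sumr; apply: eq_bigr => e _.
  rewrite /q; ring.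
have hM (S : {set V}) : (#|S| <= b1)%N -> qC C q S <= M.
  move=> hS; have := BR1 (dl R S) (mixed_dl _ hS).
  rewrite U1E /qC; under eq_bigr do rewrite pd_dl.
  done.
have pack0 : set_packing C set0.
  by apply/forallP => i; rewrite setI0 cards0.
set P := [arg max_(T > set0 | set_packing C T) #|T|].
have mE : m_star C = #|P| by rewrite /m_star (bigop.bigmax_eq_arg (F := fun T : {set E} => #|T|) set0 pack0).
have Pp : set_packing C P by rewrite /P; case: arg_maxnP.
have sumP : \sum_(e in P) p e <= b1%:R.
  rewrite /p /pd exchange_big /=.
  apply: (@le_trans _ _ (\sum_S s1 S * b1%:R)); last by rewrite -mulr_suml s1t mul1r.
  apply: ler_sum => S _; rewrite -mulr_sumr.
  case: (eqVneq (s1 S) 0) => [->|nz]; first by rewrite !mul0r.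
  have AS : A1 b1 S by apply: contraT => hS; move: nz; rewrite s1z // eqxx.
  have hb : \sum_(e in P) (e \in CS C S)%:R <= b1%:R :> R.
    by apply: le_trans (pack_bound _ _ Pp) _; rewrite ler_nat.
  apply: (ler_wpM2l (s1p S)). exact: hb.
have mM : #|P|%:R * (1 - W) <= b1%:R.
  have h : \sum_(e in P) (1 - p e) <= \sum_(e in P) W by apply: ler_sum.
  move: h; rewrite sumrB !sumr_const -[W *+ _]mulr_natl.
  have : #|P|%:R * (1 - W) = 1 *+ #|P| - #|P|%:R * W :> R by rewrite mulrBr mulr1.
  move=> ->; lra.
have M0 : 0 <= M by rewrite /M U1E; apply: sumr_ge0 => e _; apply: mulr_ge0.
have hqx x : b1%:R * q x <= M.
  case: (eqVneq (q x) 0) => [->|nz]; first by rewrite mulr0.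
  have qx : 0 < q x by rewrite lt_neqAle eq_sym nz qp.
  have px : p x = 1 - W.
    have h : \sum_e q e * (W - (1 - p e)) = 0.
      under eq_bigr do rewrite mulrBr.
      by rewrite sumrB -mulr_suml Q1 mul1r -WE subrr.
    have /psumr_eq0P h2 : forall e, true -> 0 <= q e * (W - (1 - p e)).
      by move=> e _; apply: mulr_ge0 => //; rewrite subr_ge0.
    move: (h2 h x isT) => /eqP; rewrite mulf_eq0 (negbTE nz) /= subr_eq0 => /eqP ->.
    ring.
  case: (pickP (fun S => (s1 S != 0) && (x \notin CS C S))) => [S /andP[nz1 xS] | h]; last first.
    have : p x = 1.
      rewrite /p /pd -[RHS]s1t; apply: eq_bigr => S _; move: (h S) => /= /negbT.
      rewrite negb_and => /orP[/negPn/eqP->| /negPn ->]; by rewrite ?mul0r // ?natb /= ?mulr1n ?mulr1.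
    by rewrite px; lra.
  have [u xu] := hcov x.
  have AS : A1 b1 S by apply: contraT => hS; move: nz1; rewrite s1z // eqxx.
  apply: (main_bound qp hM _ AS xS xu).
  exact: (qC_max (mixed_dl _ _) hM MqC nz1) || exact: (qC_max (conj s1p (conj s1z s1t)) hM MqC nz1).
have hq1 x : b2%:R * q x <= 1.
  have h1 : #|P|%:R * (b1%:R * q x) <= b1%:R.
    apply: le_trans mM; apply: ler_wpM2l => //; rewrite -ME; exact: hqx.
  have h2 : #|P|%:R * q x <= 1.
    rewrite -(ler_pM2l (_ : 0 < b1%:R)) ?ltr0n // mulr1; move: h1.
    by rewrite mulrCA.
  apply: le_trans h2; apply: ler_wpM2r => //; rewrite ler_nat -mE; exact: ltnW.
have [s [sp sz st sm]] : roundable b2 (fun e => b2%:R * q e).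
  apply: roundP.
    by move=> e; apply/andP; split; [apply: mulr_ge0 | exact: hq1].
  by rewrite -mulr_sumr Q1 mulr1.
have mgs e : mg s e = b2%:R * q e by rewrite /mg sm.
exists s; split.
- by split.
- split; first exact: sp.
  split; last exact: st.
  move=> T hT; apply/eqP; apply: contraT => nz; by rewrite /A2 (sz T nz) in hT.
- move=> s1' hs1'; rewrite !U1E.
  under eq_bigr do rewrite mgs -mulrA.
  under [X in _ <= X]eq_bigr do rewrite mgs -mulrA.
  rewrite -!mulr_sumr; apply: ler_wpM2l => //.
  by have := BR1 s1' hs1'; rewrite !U1E.
- move=> s2' [s2'p [s2'z s2't]]; rewrite !U2s.
  under [X in _ <= X]eq_bigr do rewrite mgs -mulrA.
  rewrite -mulr_sumr -WE.
  apply: (@le_trans _ _ (\sum_e mg s2' e * W)).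
    apply: ler_sum => e _; have hm : 0 <= mg s2' e by rewrite /mg; apply: sumr_ge0.
    exact: (ler_wpM2l hm (hW e)).
  rewrite -mulr_suml sum_mg.
  have hs : \sum_T s2' T * #|T|%:R <= b2%:R.
    apply: (@le_trans _ _ (\sum_T s2' T * b2%:R)); last by rewrite -mulr_suml s2't mul1r.
    apply: ler_sum => T _.
    case: (eqVneq (s2' T) 0) => [->|nz]; first by rewrite !mul0r.
    have : A2 b2 T by apply: contraT => hT; move: nz; rewrite s2'z // eqxx.
    rewrite /A2 -(ler_nat R) => hT.
    exact: (ler_wpM2l (s2'p T) hT).
  exact: (ler_wpM2r W0 hs).
Qed.
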